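(* Let $A\subset\mathbb{R}^N$ be nonempty and closed, let $H:[0,\infty)\times\mathbb{R}^N\times\mathbb{R}^N\to\mathbb{R}$, and let $(U,f,l)$ be a triple satisfying $(h)''$ relative to $A$ which is a representation of $H$, i.e. $H(t,x,p)=\sup_{u\in U(t)}\{\langle p,f(t,x,u)\rangle-l(t,x,u)\}$ for all $t,x,p$. Then a function $W:[0,\infty)\times A\to\mathbb{R}\cup\{+\infty\}$ is a weak solution of $-W_t+H(t,x,-W_x)=0$ on $(0,\infty)\times A$ in the sense of Definition I if and only if it is a weak solution in the sense of Definition II.
   Context: $H^*(t,x,v)=\sup_{p}\{\langle v,p\rangle-H(t,x,p)\}$, $\mathrm{dom}\,H^*(t,x,\cdot)=\{v:H^*(t,x,v)<+\infty\}$. $\mathrm{bd}A,\mathrm{int}A$ are boundary and interior. $W$ is viewed as a function on $\mathbb{R}\times\mathbb{R}^N$ equal to $+\infty$ outside $[0,\infty)\times A$; $\mathrm{dom}\,W=\{W<+\infty\}$, $\mathrm{epi}\,W$ its epigraph. For $\varphi:\mathbb{R}^d\to\mathbb{R}\cup\{+\infty\}$ and $z\in\mathrm{dom}\,\varphi$, $\partial\varphi(z)=\{p:\liminf_{y\to z}(\varphi(y)-\varphi(z)-\langle p,y-z\rangle)/|y-z|\ge0\}$. For $C\subset\mathbb{R}^d$, $T_C(z)=\{\zeta:\liminf_{\tau\to0+}\mathrm{dist}(z+\tau\zeta,C)/\tau=0\}$ and $N_C(z)=\{\xi:\langle\zeta,\xi\rangle\le0\ \forall\zeta\in T_C(z)\}$.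 Definition I: a lower semicontinuous $W:[0,\infty)\times A\to\mathbb{R}\cup\{+\infty\}$ is a weak solution if there is a set $C\subset(0,\infty)$ of full measure such that for all $(t,x)\in\mathrm{dom}W\cap(C\times\mathrm{bd}A)$: $-p_t+H(t,x,-p_x)\ge0$ for all $(p_t,p_x)\in\partial W(t,x)$ and $-p_t+\sup_{v\in\mathrm{dom}H^*(t,x,\cdot)}\langle v,-p_x\rangle\ge0$ for all $(p_t,p_x,0)\in N_{\mathrm{epi}W}(t,x,W(t,x))$; and for all $(t,x)\in\mathrm{dom}W\cap(C\times\mathrm{int}A)$ the same two relations hold with equality. Definition II: with $\bar H(t,x,p,q)=\sup_{u\in U(t)}\{\langle p,f(t,x,u)\rangle-q\,l(t,x,u)\}$, a lower semicontinuous $W$ is a weak solution if there is a set $C\subset(0,\infty)$ of full measure such that $-p_t+\bar H(t,x,-p_x,-q)\ge0$ for all $(p_t,p_x,q)\in N_{\mathrm{epi}W}(t,x,W(t,x))$ and all $(t,x)\in\mathrm{dom}W\cap(C\times\mathrm{bd}A)$, and $-p_t+\bar H(t,x,-p_x,-q)=0$ for all such normals and all $(t,x)\in\mathrm{dom}W\cap(C\times\mathrm{int}A)$. Condition $(h)''$ relative to $A$: $U:[0,\infty)\rightsquigarrow\mathbb{R}^M$ measurable with nonempty closed images; $f:[0,\infty)\times\mathbb{R}^N\times\mathbb{R}^M\to\mathbb{R}^N$, $l:[0,\infty)\times\mathbb{R}^N\times\mathbb{R}^M\to\mathbb{R}$ with (h1) measurability in $t$, continuity in $(x,u)$, and $l\ge\phi(t)$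 for some $\phi\in L^1([0,\infty);\mathbb{R})$; (h2) $|f|+|l|\le c(t)(1+|x|)$ on $u\in U(t)$, $c\in L^1_{\rm loc}([0,\infty);[0,\infty))$; (h3) $x\rightsquigarrow(f,l)(t,x,U(t))$ Hausdorff-continuous with closed images; (h4) $\{(f(t,x,u),l(t,x,u)+r):u\in U(t),r\ge0\}$ convex; (h5) $|f|+|l|\le q(t)$ for $x\in\mathrm{bd}A$, $u\in U(t)$; (h6) $|f(t,x,u)-f(t,y,u)|+|l(t,x,u)-l(t,y,u)|\le k(t)|x-y|$ for $u\in U(t)$; here $k,q\in\mathscr{L}_{\rm loc}$, the set of $\varphi\in L^1_{\rm loc}([0,\infty);[0,\infty))$ with $\lim_{\sigma\to0}\sup\{\int_I\varphi: I$ compact interval of length $\le\sigma\}=0$. *)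

(* Defs.v *)
From HB Require Import structures.
From mathcomp Require Import all_boot all_order all_algebra.
From mathcomp Require Import all_classical all_reals all_analysis.

Set Implicit Arguments.
Unset Strict Implicit.
Unset Printing Implicit Defensive.
Import Order.TTheory GRing.Theory Num.Theory.
Import numFieldNormedType.Exports.
Local Open Scope classical_set_scope.
Local Open Scope ring_scope.

Section Defs.
Variable R : realType.

Definition dotv {d} (p v : 'rV[R]_d) : R := \sum_(i < d) p 0 i * v 0 i.
Definition enorm {d} (v : 'rV[R]_d) : R := Num.sqrt (dotv v v).

(* Lebesgue (= completed) measurable structure on R and Lebesgue measure *)
Definition Lreal := caratheodory_type (R:=R)
  (T:=lebesgue_stieltjes_measure_ocitv_type__canonical__measurable_structure_SemiRingOfSets R)
  (wlength idfun)^*%mu.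
Definition Lmu : set Lreal -> \bar R := @completed_lebesgue_measure R.

Definition Lmeasurable_set (S : set R) := measurable (S : set Lreal).
Definition Lmeasurable_fun (D : set R) (g : R -> R) :=
  measurable_fun (D : set Lreal) (g : Lreal -> R).

Definition L1 (phi : R -> R) :=
  Lmu.-integrable (`[0, +oo[%classic : set Lreal) (EFin \o phi).
Definition L1loc_nonneg (c : R -> R) :=
  (forall t, 0 <= t -> 0 <= c t) /\
  forall T, 0 <= T -> Lmu.-integrable (`[0, T]%classic : set Lreal) (EFin \o c).
Definition scrLloc (phi : R -> R) :=
  L1loc_nonneg phi /\
  forall e, 0 < e -> exists2 s, 0 < s & forall a b, 0 <= a -> a <= b -> b - a <= s ->
    (\int[Lmu]_(t in (`[a, b]%classic : set Lreal)) (phi t)%:E <= e%:E)%E.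

Definition full_measure_pos (C : set R) :=
  C `<=` `]0, +oo[%classic /\
  Lmu.-negligible ((`]0, +oo[%classic `\` C) : set Lreal).

Definition meas_multifun {M} (U : R -> set 'rV[R]_M) :=
  forall O : set 'rV[R]_M, open O ->
    Lmeasurable_set [set t | 0 <= t /\ (U t `&` O) !=set0].

Definition bdry {N} (A : set 'rV[R]_N) := closure A `\` interior A.

Definition pair1 {d} (v : 'rV[R]_d) (r : R) : 'rV[R]_(d + 1) := row_mx v r%:M.
Definition pt2 {N} (t : R) (x : 'rV[R]_N) : 'rV[R]_(1 + N) := row_mx t%:M x.

Definition haus_close {d} (X Y : set 'rV[R]_d) (e : R) :=
  (forall a, X a -> exists2 b, Y b & enorm (a - b) < e) /\
  (forall b, Y b -> exists2 a, X a & enorm (b - a) < e).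
Definition haus_continuous {N d} (G : 'rV[R]_N -> set 'rV[R]_d) :=
  forall x e, 0 < e -> exists2 dl, 0 < dl &
    forall y, enorm (y - x) < dl -> haus_close (G x) (G y) e.

Definition convexS {d} (S : set 'rV[R]_d) :=
  forall a b lam, S a -> S b -> 0 <= lam <= 1 -> S (lam *: a + (1 - lam) *: b).

Section Hyp.
Variables (N M : nat) (A : set 'rV[R]_N) (U : R -> set 'rV[R]_M)
  (f : R -> 'rV[R]_N -> 'rV[R]_M -> 'rV[R]_N) (l : R -> 'rV[R]_N -> 'rV[R]_M -> R).

Definition hU := meas_multifun U /\
  forall t, 0 <= t -> U t !=set0 /\ closed (U t).

Definition h1 :=
  [/\ (forall x u (i : 'I_N), Lmeasurable_fun `[0, +oo[%classic (fun t => f t x u 0 i)),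
      (forall x u, Lmeasurable_fun `[0, +oo[%classic (fun t => l t x u)),
      (forall t, 0 <= t ->
         continuous (fun xu : 'rV[R]_N * 'rV[R]_M => f t xu.1 xu.2) /\
         continuous (fun xu : 'rV[R]_N * 'rV[R]_M => l t xu.1 xu.2)) &
      (exists2 phi, L1 phi & forall t x u, 0 <= t -> U t u -> phi t <= l t x u)].

Definition h2 := exists2 c, L1loc_nonneg c &
  forall t x u, 0 <= t -> U t u -> enorm (f t x u) + `|l t x u| <= c t * (1 + enorm x).

Definition fl_image (t : R) (x : 'rV[R]_N) : set 'rV[R]_(N + 1) :=
  [set pair1 (f t x u) (l t x u) | u in U t].

Definition h3 := forall t, 0 <= t ->
  haus_continuous (fl_image t) /\ forall x, closed (fl_image t x).

Definition h4 := forall t x, 0 <= t ->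
  convexS [set w | exists u r, [/\ U t u, 0 <= r & w = pair1 (f t x u) (l t x u + r)]].

Definition h5 := exists2 q, scrLloc q &
  forall t x u, 0 <= t -> bdry A x -> U t u -> enorm (f t x u) + `|l t x u| <= q t.

Definition h6 := exists2 k, scrLloc k &
  forall t x y u, 0 <= t -> U t u ->
    enorm (f t x u - f t y u) + `|l t x u - l t y u| <= k t * enorm (x - y).

Definition hpp := hU /\ h1 /\ h2 /\ h3 /\ h4 /\ h5 /\ h6.
End Hyp.

Definition representation {N M} (H : R -> 'rV[R]_N -> 'rV[R]_N -> R)
  (U : R -> set 'rV[R]_M) (f : R -> 'rV[R]_N -> 'rV[R]_M -> 'rV[R]_N)
  (l : R -> 'rV[R]_N -> 'rV[R]_M -> R) :=
  forall t x p, 0 <= t ->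
    (H t x p)%:E = ereal_sup [set (dotv p (f t x u) - l t x u)%:E | u in U t].

(* Frechet subdifferential: liminf_{y->z} (phi y - phi z - <p,y-z>)/|y-z| >= 0 *)
Definition subdiff {d} (phi : 'rV[R]_d -> \bar R) (z p : 'rV[R]_d) :=
  forall e, 0 < e -> exists2 dl, 0 < dl & forall y, 0 < enorm (y - z) < dl ->
    ((- e * enorm (y - z))%:E <= phi y - phi z - (dotv p (y - z))%:E)%E.

(* contingent cone: liminf_{tau->0+} dist(z + tau zeta, C)/tau = 0 *)
Definition tangent_cone {d} (C : set 'rV[R]_d) (z zeta : 'rV[R]_d) :=
  forall e dl : R, 0 < e -> 0 < dl -> exists tau : R, (0 < tau < dl) /\
    (exists2 c, C c & enorm (z + tau *: zeta - c) < e * tau).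

Definition normal_cone {d} (C : set 'rV[R]_d) (z xi : 'rV[R]_d) :=
  forall zeta, tangent_cone C z zeta -> dotv zeta xi <= 0.

Definition epi {d} (g : 'rV[R]_d -> \bar R) : set 'rV[R]_(d + 1) :=
  [set w | (g (lsubmx w) <= (rsubmx w 0 0)%:E)%E].

Definition Wext {N} (A : set 'rV[R]_N) (W : R -> 'rV[R]_N -> \bar R)
  (z : 'rV[R]_(1 + N)) : \bar R :=
  if `[< 0 <= lsubmx z 0 0 /\ A (rsubmx z) >] then W (lsubmx z 0 0) (rsubmx z)
  else +oo%E.

Definition Hstar {N} (H : R -> 'rV[R]_N -> 'rV[R]_N -> R) t x (v : 'rV[R]_N) : \bar R :=
  ereal_sup [set (dotv v p - H t x p)%:E | p in [set: 'rV[R]_N]].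
Definition domHstar {N} (H : R -> 'rV[R]_N -> 'rV[R]_N -> R) t x :=
  [set v | (Hstar H t x v < +oo)%E].

Definition Hbar {N M} (U : R -> set 'rV[R]_M) (f : R -> 'rV[R]_N -> 'rV[R]_M -> 'rV[R]_N)
  (l : R -> 'rV[R]_N -> 'rV[R]_M -> R) t x (p : 'rV[R]_N) (q : R) : \bar R :=
  ereal_sup [set (dotv p (f t x u) - q * l t x u)%:E | u in U t].

Section Weak.
Variables (N : nat) (A : set 'rV[R]_N) (W : R -> 'rV[R]_N -> \bar R).
Let Wb := Wext A W.
Definition epi_pt (t : R) (x : 'rV[R]_N) : 'rV[R]_(1 + N + 1) :=
  row_mx (pt2 t x) (fine (Wb (pt2 t x)))%:M.

Definition weak_solution_I (H : R -> 'rV[R]_N -> 'rV[R]_N -> R) :=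
  lower_semicontinuous Wb /\
  exists C, full_measure_pos C /\
  forall t x, C t -> (Wb (pt2 t x) < +oo)%E ->
    (bdry A x ->
       (forall pt px, subdiff Wb (pt2 t x) (pt2 pt px) -> 0 <= - pt + H t x (- px)) /\
       (forall pt px, normal_cone (epi Wb) (epi_pt t x) (row_mx (pt2 pt px) 0) ->
          (0 <= (- pt)%:E + ereal_sup [set (dotv v (- px))%:E | v in domHstar H t x])%E)) /\
    (interior A x ->
       (forall pt px, subdiff Wb (pt2 t x) (pt2 pt px) -> - pt + H t x (- px) = 0) /\
       (forall pt px, normal_cone (epi Wb) (epi_pt t x) (row_mx (pt2 pt px) 0) ->
          ((- pt)%:E + ereal_sup [set (dotv v (- px))%:E | v in domHstar H t x] = 0)%E)).

Definition weak_solution_II {M} (U : R -> set 'rV[R]_M)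
  (f : R -> 'rV[R]_N -> 'rV[R]_M -> 'rV[R]_N) (l : R -> 'rV[R]_N -> 'rV[R]_M -> R) :=
  lower_semicontinuous Wb /\
  exists C, full_measure_pos C /\
  forall t x, C t -> (Wb (pt2 t x) < +oo)%E ->
    (bdry A x -> forall pt px q,
       normal_cone (epi Wb) (epi_pt t x) (row_mx (pt2 pt px) q%:M) ->
       (0 <= (- pt)%:E + Hbar U f l t x (- px) (- q))%E) /\
    (interior A x -> forall pt px q,
       normal_cone (epi Wb) (epi_pt t x) (row_mx (pt2 pt px) q%:M) ->
       ((- pt)%:E + Hbar U f l t x (- px) (- q) = 0)%E).
End Weak.

End Defs.

(* Main.v *)
Require Import Defs.
From HB Require Import structures.
From mathcomp Require Import all_boot all_order all_algebra.
From mathcomp Require Import all_classical all_reals all_analysis.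
From mathcomp Require Import ring lra.
Import Order.TTheory GRing.Theory Num.Theory.
Import numFieldNormedType.Exports.
Local Open Scope classical_set_scope.
Local Open Scope ring_scope.


Section Basic.
Context {R : realType}.

Lemma dotvC d (p v : 'rV[R]_d) : dotv p v = dotv v p.
Proof. by rewrite /dotv; apply: eq_bigr => i _; rewrite mulrC. Qed.

Lemma dotvDr d (p u v : 'rV[R]_d) : dotv p (u + v) = dotv p u + dotv p v.
Proof. by rewrite /dotv -big_split; apply: eq_bigr => i _; rewrite !mxE mulrDr. Qed.

Lemma dotvZr d a (p v : 'rV[R]_d) : dotv p (a *: v) = a * dotv p v.
Proof. by rewrite /dotv mulr_sumr; apply: eq_bigr => i _; rewrite !mxE mulrCA. Qed.

Lemma dotvNr d (p v : 'rV[R]_d) : dotv p (- v) = - dotv p v.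
Proof. by rewrite /dotv -sumrN; apply: eq_bigr => i _; rewrite !mxE mulrN. Qed.

Lemma dotvBr d (p u v : 'rV[R]_d) : dotv p (u - v) = dotv p u - dotv p v.
Proof. by rewrite dotvDr dotvNr. Qed.

Lemma dotvZl d a (p v : 'rV[R]_d) : dotv (a *: p) v = a * dotv p v.
Proof. by rewrite dotvC dotvZr dotvC. Qed.

Lemma dotvNl d (p v : 'rV[R]_d) : dotv (- p) v = - dotv p v.
Proof. by rewrite dotvC dotvNr dotvC. Qed.

Lemma dotv_row_mx {d1 d2} (a c : 'rV[R]_d1) (b e : 'rV[R]_d2) :
  dotv (row_mx a b) (row_mx c e) = dotv a c + dotv b e.
Proof.
rewrite /dotv big_split_ord; congr (_ + _); apply: eq_bigr => i _.
  by rewrite !row_mxEl.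
by rewrite !row_mxEr.
Qed.

Lemma dotv1 (b e : 'rV[R]_1) : dotv b e = b 0 0 * e 0 0.
Proof. by rewrite /dotv big_ord1. Qed.

Lemma dotv_ge0 {d} (v : 'rV[R]_d) : 0 <= dotv v v.
Proof. by apply: sumr_ge0 => i _; rewrite -expr2 sqr_ge0. Qed.

Lemma enorm_ge0 {d} (v : 'rV[R]_d) : 0 <= enorm v.
Proof. exact: sqrtr_ge0. Qed.

Lemma coord_le_enorm {d} (v : 'rV[R]_d) i : `|v 0 i| <= enorm v.
Proof.
rewrite /enorm -sqrtr_sqr ler_sqrt ?dotv_ge0 // /dotv (bigD1 i) //= expr2 lerDl.
by apply: sumr_ge0 => j _; rewrite -expr2 sqr_ge0.
Qed.

Lemma enorm_le_sum {d} (v : 'rV[R]_d) : enorm v <= \sum_i `|v 0 i|.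
Proof.
have S0 : 0 <= \sum_i `|v 0 i| by apply: sumr_ge0.
rewrite /enorm -[X in _ <= X](ger0_norm S0) -sqrtr_sqr ler_sqrt ?sqr_ge0 // expr2.
rewrite /dotv mulr_suml; apply: ler_sum => i _.
apply: le_trans (ler_norm _) _; rewrite normrM; apply: ler_wpM2l => //.
rewrite (bigD1 i) //= lerDl; exact: sumr_ge0.
Qed.

Lemma dotv_bound {d} (p u : 'rV[R]_d) b : (forall i, `|u 0 i| <= b) ->
  `|dotv p u| <= (\sum_i `|p 0 i|) * b.
Proof.
move=> hb; apply: le_trans (ler_norm_sum _ _ _) _; rewrite mulr_suml.
by apply: ler_sum => i _; rewrite normrM ler_wpM2l.
Qed.

Lemma enorm_row_mx_l {d1 d2} (a : 'rV[R]_d1) (b : 'rV[R]_d2) :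
  enorm a <= enorm (row_mx a b).
Proof. by rewrite /enorm ler_sqrt ?dotv_ge0 // dotv_row_mx lerDl dotv_ge0. Qed.

Lemma enorm_row_mx_r {d1} (a : 'rV[R]_d1) (b : 'rV[R]_1) :
  `|b 0 0| <= enorm (row_mx a b).
Proof.
apply: (le_trans (coord_le_enorm b 0)).
by rewrite /enorm ler_sqrt ?dotv_ge0 // dotv_row_mx lerDr dotv_ge0.
Qed.

Lemma enorm0_eq {d} (v : 'rV[R]_d) : enorm v = 0 -> v = 0.
Proof.
move=> h; apply/matrixP => i j; rewrite (ord1 i) mxE; apply/normr0_eq0.
by apply/le_anti; rewrite normr_ge0 andbT -h coord_le_enorm.
Qed.

End Basic.



Section Epi.
Context {R : realType}.

Lemma dotv0r {d} (p : 'rV[R]_d) : dotv p 0 = 0.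
Proof. by rewrite /dotv big1 // => i _; rewrite mxE mulr0. Qed.

Lemma enorm_lsub {d} (E : 'rV[R]_(d + 1)) : enorm (lsubmx E) <= enorm E.
Proof. by rewrite -{2}(hsubmxK E) enorm_row_mx_l. Qed.

Lemma enorm_rsub {d} (E : 'rV[R]_(d + 1)) : `|rsubmx E 0 0| <= enorm E.
Proof. by rewrite -{2}(hsubmxK E) enorm_row_mx_r. Qed.

Lemma sum_const_ord {d} (c : R) : \sum_(i < d) c = d%:R * c.
Proof. by rewrite sumr_const card_ord mulr_natl. Qed.

Lemma subdiff_normal {d} (phi : 'rV[R]_d -> \bar R) z w p : phi z = w%:E ->
  subdiff phi z p -> normal_cone (epi phi) (row_mx z w%:M) (row_mx p (-1)%:M).
Proof.
move=> hz Hs zeta Ht.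
set zt := lsubmx zeta; set r : R := rsubmx zeta 0 0.
have ez : zeta = row_mx zt r%:M by rewrite /r -mx11_scalar hsubmxK.
rewrite ez dotv_row_mx dotv1 !mxE eqxx !mulr1n dotvC.
rewrite leNgt; apply/negP => hg0.
set g : R := dotv p zt + r * -1.
set P1 : R := \sum_i `|p 0 i|; set Z1 : R := \sum_i `|zt 0 i|.
have P10 : 0 <= P1 by apply: sumr_ge0.
have Z10 : 0 <= Z1 by apply: sumr_ge0.
have d0 : 0 <= d%:R :> R by [].
set K : R := 1 + P1 + Z1 + d%:R.
have K0 : 0 < K by rewrite /K; lra.
set eps : R := g / (K + g).
have g0 : 0 < g by [].
have Kg0 : 0 < K + g by lra.
have heps : eps * (K + g) = g by rewrite /eps mulfVK // gt_eqF.
have eps0 : 0 < eps by rewrite /eps divr_gt0.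
have [dl dl0 Hd] := Hs eps eps0.
have den0 : 0 < d%:R * eps + Z1 + 1 by nra.
set dl' : R := dl / (d%:R * eps + Z1 + 1).
have dl'0 : 0 < dl' by rewrite /dl' divr_gt0.
have [tau [/andP[tau0 taudl] [c Ec Hc]]] := Ht eps dl' eps0 dl'0.
set E := row_mx z w%:M + tau *: zeta - c.
set y := lsubmx c; set s : R := rsubmx c 0 0.
set u := z + tau *: zt - y.
have eu : lsubmx E = u by rewrite /E /u /zt /y linearB linearD linearZ /= row_mxKl.
have es : rsubmx E 0 0 = w + tau * r - s.
  by rewrite /E /s /r linearB linearD linearZ /= row_mxKr !mxE eqxx mulr1n.
have hu : forall i, `|u 0 i| <= eps * tau.
  move=> i; have := coord_le_enorm (lsubmx E) i; have := enorm_lsub E.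
  rewrite eu; move: Hc; rewrite -/E; lra.
have hs : s < w + tau * r + eps * tau.
  have := le_lt_trans (enorm_rsub E) Hc; rewrite es ltr_norml => /andP[h1 _]; lra.
have eyz i : (y - z) 0 i = tau * zt 0 i - u 0 i by rewrite /u !mxE; ring.
have hn : enorm (y - z) <= tau * Z1 + d%:R * (eps * tau).
  apply: le_trans (enorm_le_sum _) _.
  rewrite -sum_const_ord /Z1 mulr_sumr -big_split; apply: ler_sum => i _.
  rewrite eyz; apply: le_trans (ler_normB _ _) _; rewrite normrM (gtr0_norm tau0).
  by rewrite lerD2l.
have hclaim : ((w + dotv p (y - z) - eps * enorm (y - z))%:E <= phi y)%E.
  have [hn0|hn0] := eqVneq (enorm (y - z)) 0.
    have yz : y = z by apply/eqP; rewrite -subr_eq0; apply/eqP/enorm0_eq.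
    by rewrite hn0 yz subrr dotv0r hz mulr0 subr0 addr0.
  have hpos : 0 < enorm (y - z) by rewrite lt_neqAle eq_sym hn0 enorm_ge0.
  have hlt : enorm (y - z) < dl.
    apply: le_lt_trans hn _.
    have : tau * (d%:R * eps + Z1 + 1) < dl by rewrite -ltr_pdivlMr.
    nra.
  have := Hd y; rewrite hpos hlt => /(_ isT); rewrite hz.
  rewrite mulNr.
  case: (phi y) => [a||] /=.
  - by rewrite -!EFinD !lee_fin => h; lra.
  - by move=> _; rewrite leey.
  - by rewrite !addNye leeNy_eq => /eqP.
have hreal : w + dotv p (y - z) - eps * enorm (y - z) <= s.
  by rewrite -lee_fin; apply: le_trans hclaim Ec.
have eD : dotv p (y - z) = tau * dotv p zt - dotv p u.
  by rewrite /u !dotvBr dotvDr dotvZr; ring.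
have hD := dotv_bound p u _ hu.
rewrite ler_norml in hD; case/andP: hD => hD1 hD2.
have hen : eps * enorm (y - z) <= eps * (tau * Z1 + d%:R * (eps * tau)).
  by rewrite ler_wpM2l // ltW.
have key : tau * g < tau * (eps * (1 + P1 + Z1 + d%:R * eps)).
  rewrite /g; rewrite eD in hreal; rewrite -/P1 in hD1 hD2; lra.
rewrite ltr_pM2l // in key.
have eps1 : eps < 1 by nra.
have h1 : d%:R * eps <= d%:R by rewrite ler_piMr // ltW.
have h2 : eps * (d%:R * eps) <= eps * d%:R by rewrite ler_wpM2l // ltW.
have eK : K = 1 + P1 + Z1 + d%:R by [].
rewrite eK in heps.
have h3 : 0 < eps * g by rewrite mulr_gt0.
clear -key h2 heps h3; lra.
Qed.


Lemma enorm_row_mx_le {d} (a : 'rV[R]_d) (b : 'rV[R]_1) :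
  enorm (row_mx a b) <= \sum_i `|a 0 i| + `|b 0 0|.
Proof.
apply: le_trans (enorm_le_sum _) _.
rewrite big_split_ord /= big_ord1 row_mxEr lerD2r.
by rewrite (eq_bigr (fun i => `|a 0 i|)) // => i _; rewrite row_mxEl.
Qed.

Lemma normal_subdiff {d} (phi : 'rV[R]_d -> \bar R) z w p : phi z = w%:E ->
  normal_cone (epi phi) (row_mx z w%:M) (row_mx p (-1)%:M) -> subdiff phi z p.
Proof.
move=> hz Hn e e0.
apply: contrapT => Hno.
have Hk : forall k : nat, exists y, (0 < enorm (y - z) < k.+1%:R^-1) /\
   (phi y - phi z - (dotv p (y - z))%:E < (- e * enorm (y - z))%:E)%E.
  move=> k; apply: contrapT => Hk; apply: Hno; exists k.+1%:R^-1 => // y hy.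
  rewrite leNgt; apply/negP => hlt; apply: Hk; by exists y.
have [Y HY] := choice Hk.
pose rho k := enorm (Y k - z).
pose zk k := (rho k)^-1 *: (Y k - z).
have rho0 k : 0 < rho k by have [/andP[] ] := HY k.
have eY k : Y k - z = rho k *: zk k.
  by rewrite /zk scalerA divff ?scale1r // gt_eqF.
have eY' k : Y k = z + rho k *: zk k by rewrite -eY addrC subrK.
have zkc k i : `|zk k 0 i| <= 1.
  have := coord_le_enorm (Y k - z) i.
  move=> h; rewrite [zk k 0 i]mxE normrM ger0_norm; last by rewrite invr_ge0 ltW.
  by rewrite mulrC ler_pdivrMr // mul1r.
clearbody zk.
have cpt := @rV_compact R d (fun _ => `[-1, 1]%classic) (fun _ => @segment_compact R (-1) 1).
have Fc : (zk @ \oo) [set v | forall i, `[-1, 1]%classic (v ord0 i)].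
  exists 0%N => // k _ i /=; rewrite in_itv /= -ler_norml; exact: zkc.
have [zeta [_ Hcl]] := cpt (zk @ \oo) _ Fc.
have : dotv (row_mx zeta (dotv p zeta - e)%:M) (row_mx p (-1)%:M) <= 0.
  apply: Hn => e' dl' e'0 dl'0.
  set P1 : R := \sum_i `|p 0 i|.
  have P10 : 0 <= P1 by apply: sumr_ge0.
  have den0 : 0 < d%:R + P1 + 1 :> R by rewrite ltr_wpDl // addr_ge0.
  set dt : R := e' / (d%:R + P1 + 1).
  have dt0 : 0 < dt by rewrite /dt divr_gt0.
  have hdt : dt * (d%:R + P1 + 1) = e' by rewrite /dt mulfVK // gt_eqF.
  have [v [[k hk <-] hb]] := Hcl (zk @` [set k | k.+1%:R^-1 < dl']) (ball zeta dt)
    (filterS (fun k hk => ex_intro2 _ _ k hk erefl) (near_infty_natSinv_lt (PosNum dl'0)))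
    (nbhsx_ballx zeta dt dt0).
  have hbi : forall i, `|zeta 0 i - zk k 0 i| < dt.
    move=> i; have [_ /(_ 0 i)] := hb; by [].
  exists (rho k); split.
    have [/andP[_ h] _] := HY k.
    by rewrite rho0 /=; apply: lt_trans h hk.
  exists (row_mx (Y k) (w + rho k * (dotv p (zk k) - e))%:M).
    rewrite /epi /= row_mxKl row_mxKr mxE eqxx mulr1n.
    have [_] := HY k; rewrite hz -/(rho k) eY dotvZr.
    case: (phi (Y k)) => [a||].
    - by rewrite -!EFinD !lte_fin !lee_fin => h; lra.
    - by rewrite addye // addye // ltNge leey.
    - by move=> _; rewrite leNye.
  rewrite scale_row_mx opp_row_mx !add_row_mx.
  apply: le_lt_trans (enorm_row_mx_le _ _) _.
  rewrite !mxE eqxx !mulr1n.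
  have e1 : forall i, `|(z + rho k *: zeta - Y k) 0 i| <= rho k * dt.
    move=> i; rewrite eY' !mxE.
    have -> : z 0 i + rho k * zeta 0 i - (z 0 i + rho k * zk k 0 i) =
      rho k * (zeta 0 i - zk k 0 i) by ring.
    rewrite normrM (gtr0_norm (rho0 k)) (ler_wpM2l (ltW (rho0 k))) //; exact: ltW (hbi i).
  have e2 : `|w + rho k * (dotv p zeta - e) - (w + rho k * (dotv p (zk k) - e))|
      <= rho k * (P1 * dt).
    have -> : w + rho k * (dotv p zeta - e) - (w + rho k * (dotv p (zk k) - e))
      = rho k * dotv p (zeta - zk k) by rewrite dotvBr; ring.
    rewrite normrM (gtr0_norm (rho0 k)) (ler_wpM2l (ltW (rho0 k))) //.
    rewrite /P1; apply: dotv_bound => i; rewrite mxE.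
    rewrite mxE; exact: ltW (hbi i).
  have e3 : \sum_i `|(z + rho k *: zeta - Y k) 0 i| <= d%:R * (rho k * dt).
    rewrite -sum_const_ord; exact: ler_sum.
  have := rho0 k; clear -e2 e3 hdt dt0 P10; nra.
rewrite dotv_row_mx dotv1 !mxE eqxx !mulr1n dotvC.
lra.
Qed.

End Epi.



Section Ham.
Context {R : realType}.

Lemma scalar0 n : (0 : R)%:M = 0 :> 'M[R]_n.
Proof. by apply/matrixP => i j; rewrite !mxE mul0rn. Qed.

Lemma normal_scale {d} (C : set 'rV[R]_d) z xi a : 0 <= a ->
  normal_cone C z xi -> normal_cone C z (a *: xi).
Proof. by move=> a0 Hn zeta Ht; rewrite dotvZr mulr_ge0_le0 // Hn. Qed.

Lemma normal_q_le0 {d} (phi : 'rV[R]_d -> \bar R) z w a q : phi z = w%:E ->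
  normal_cone (epi phi) (row_mx z w%:M) (row_mx a q%:M) -> q <= 0.
Proof.
move=> hz Hn.
have := Hn (row_mx 0 1%:M); rewrite dotv_row_mx dotv1 !mxE eqxx mulr1n mul1r.
rewrite dotvC dotv0r add0r; apply => e dl e0 dl0.
exists (dl / 2); split; first by rewrite divr_gt0 //= ltr_pdivrMr // ltr_pMr // ltr1n.
exists (row_mx z w%:M + (dl / 2) *: row_mx 0 1%:M).
  rewrite /epi /= linearD linearZ /= !row_mxKl scaler0 addr0 hz.
  rewrite linearD linearZ /= !row_mxKr !mxE eqxx !mulr1n lee_fin lerDl mulr1.
  by rewrite ltW // divr_gt0.
rewrite subrr /enorm dotv0r sqrtr0 mulr_gt0 // divr_gt0 //.
Qed.

Context {N M : nat} {H : R -> 'rV[R]_N -> 'rV[R]_N -> R} {U : R -> set 'rV[R]_M}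
  {f : R -> 'rV[R]_N -> 'rV[R]_M -> 'rV[R]_N} {l : R -> 'rV[R]_N -> 'rV[R]_M -> R}.
Hypothesis rep : representation H U f l.

Lemma Hbar_one t x p : 0 <= t -> Hbar U f l t x p 1 = (H t x p)%:E.
Proof.
move=> t0; rewrite /Hbar (rep t x p t0); congr ereal_sup.
by apply: eq_imagel => u _; rewrite mul1r.
Qed.

Lemma Hbar_scale t x p a : 0 <= t -> 0 < a ->
  Hbar U f l t x p a = (a * H t x (a^-1 *: p))%:E.
Proof.
move=> t0 a0; rewrite /Hbar EFinM (rep t x _ t0) -(ereal_sup_pZl _ a0); congr ereal_sup.
apply/seteqP; split.
  move=> _ [u Uu <-]; exists (dotv (a^-1 *: p) (f t x u) - l t x u)%:E; first by exists u.
  rewrite -EFinM dotvZl; congr (_%:E).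
  by rewrite mulrBr mulrA mulfV ?gt_eqF // mul1r.
move=> _ [_ [u Uu <-] <-]; exists u => //.
rewrite -EFinM dotvZl; congr (_%:E).
by rewrite mulrBr mulrA mulfV ?gt_eqF // mul1r.
Qed.

Lemma Hbar_zero t x w : 0 <= t -> U t !=set0 ->
  (exists phi : R -> R, forall u, U t u -> phi t <= l t x u) ->
  Hbar U f l t x w 0 = ereal_sup [set (dotv v w)%:E | v in domHstar H t x].
Proof.
move=> t0 [u0 Uu0] [phi Hphi].
have dom : forall u, U t u -> domHstar H t x (f t x u).
  move=> u Uu; rewrite /domHstar /=.
  apply: (@le_lt_trans _ _ (l t x u)%:E); last exact: ltry.
  apply: ge_ereal_sup => _ [q _ <-]; rewrite lee_fin.
  have : ((dotv q (f t x u) - l t x u)%:E <= (H t x q)%:E)%E.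
    by rewrite (rep t x q t0); apply: ereal_sup_ubound; exists u.
  by rewrite lee_fin dotvC; lra.
apply/le_anti/andP; split.
  apply: ge_ereal_sup => _ [u Uu <-]; apply: ereal_sup_ubound.
  by exists (f t x u); [exact: dom | rewrite dotvC mul0r subr0].
apply: ge_ereal_sup => _ [v Hv <-].
set S := Hbar U f l t x w 0.
have Sge : forall u, U t u -> ((dotv w (f t x u))%:E <= S)%E.
  move=> u Uu; apply: ereal_sup_ubound; exists u => //; by rewrite mul0r subr0.
case eS : S => [s||]; last 2 first.
- exact: leey.
- by have := Sge u0 Uu0; rewrite eS leeNy_eq.
rewrite lee_fin leNgt; apply/negP => hgap.
have Sge' : forall u, U t u -> dotv w (f t x u) <= s.
  by move=> u Uu; have := Sge u Uu; rewrite eS lee_fin.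
have HB : forall lam, 0 <= lam -> H t x (lam *: w) <= lam * s - phi t.
  move=> lam lam0; rewrite -lee_fin (rep t x _ t0).
  apply: ge_ereal_sup => _ [u Uu <-]; rewrite lee_fin dotvZl.
  have := Sge' u Uu; have := Hphi u Uu.
  have := ler_wpM2l lam0 (Sge' u Uu); lra.
have HS : forall lam, 0 <= lam ->
    ((dotv v (lam *: w) - H t x (lam *: w))%:E <= Hstar H t x v)%E.
  by move=> lam lam0; apply: ereal_sup_ubound; exists (lam *: w).
move: Hv; rewrite /domHstar /=.
case eH : (Hstar H t x v) => [h||] // _; last first.
  by have := HS 0 (lexx _); rewrite eH leeNy_eq.
set gap := dotv v w - s.
have gap0 : 0 < gap by rewrite /gap subr_gt0.
set lam := (`|h| + `|phi t| + 1) / gap.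
have lam0 : 0 < lam by rewrite /lam divr_gt0 // ltr_wpDl // addr_ge0.
have elam : lam * gap = `|h| + `|phi t| + 1 by rewrite /lam mulfVK // gt_eqF.
have := HS lam (ltW lam0); rewrite eH lee_fin dotvZr.
have := HB lam (ltW lam0).
have h1 := ler_norm h; have h2 := ler_norm (- phi t); rewrite normrN in h2.
rewrite /gap in elam; lra.
Qed.

End Ham.



Lemma Wext_pt2 (R : realType) N (A : set 'rV[R]_N) W t x :
  Wext A W (pt2 t x) = if `[< 0 <= t /\ A x >] then W t x else +oo%E.
Proof. by rewrite /Wext /pt2 row_mxKl row_mxKr mxE eqxx mulr1n. Qed.

Lemma pt2_scale (R : realType) N a t (x : 'rV[R]_N) : a *: pt2 t x = pt2 (a * t) (a *: x).
Proof. by rewrite /pt2 scale_row_mx scale_scalar_mx. Qed.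

Theorem proposition4p3 (R : realType) (N M : nat) (A : set 'rV[R]_N)
  (H : R -> 'rV[R]_N -> 'rV[R]_N -> R) (U : R -> set 'rV[R]_M)
  (f : R -> 'rV[R]_N -> 'rV[R]_M -> 'rV[R]_N) (l : R -> 'rV[R]_N -> 'rV[R]_M -> R) :
  A !=set0 -> closed A -> hpp A U f l -> representation H U f l ->
  forall W : R -> 'rV[R]_N -> \bar R,
    (forall t x, 0 <= t -> A x -> W t x != -oo%E) ->
    (weak_solution_I A W H <-> weak_solution_II A W U f l).
Proof.
move=> _ _ [[_ hU] [[_ _ _ [phi _ hphi]] _]] rep W Wn.
have Une t : 0 <= t -> U t !=set0 by move=> t0; case: (hU t t0).
have Hphi t x : 0 <= t -> exists phi0 : R -> R, forall u, U t u -> phi0 t <= l t x u.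
  by move=> t0; exists phi => u Uu; exact: hphi.
have key : forall t x, 0 < t -> (Wext A W (pt2 t x) < +oo)%E ->
    Wext A W (pt2 t x) = (fine (Wext A W (pt2 t x)))%:E.
  move=> t x t0; rewrite Wext_pt2; case: asboolP => [[_ Ax]|] //.
  move=> Wlt; rewrite fineK // fin_numE Wn ?ltW // lt_eqF //.
have Ct0 : forall C : set R, full_measure_pos C -> forall t, C t -> 0 < t.
  by move=> C [HC _] t /HC; rewrite /= in_itv /= andbT.
split.
- move=> [lsc [C [HC HI]]]; split => //; exists C; split => // t x Ct Wlt.
  have t0 := Ct0 C HC t Ct.
  have hz := key t x t0 Wlt.
  have [Ib Ii] := HI t x Ct Wlt.
  have HZ w := Hbar_zero rep t x w (ltW t0) (Une t (ltW t0)) (Hphi t x (ltW t0)).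
  split.
  + move=> bx pt px q Hn; have [Isub Inor] := Ib bx.
    have := normal_q_le0 _ _ _ _ _ hz Hn; rewrite le_eqVlt => /orP[/eqP qeq|qlt].
    * rewrite qeq scalar0 in Hn; rewrite qeq oppr0 HZ; exact: Inor pt px Hn.
    * set a := (-q)^-1.
      have a0 : 0 < a by rewrite invr_gt0 oppr_gt0.
      have Hn' := normal_scale _ _ _ _ (ltW a0) Hn.
      have eaq : a * q = -1 by rewrite /a invrN mulNr mulVf ?lt_eqF.
      rewrite scale_row_mx pt2_scale scale_scalar_mx eaq in Hn'.
      have Hs := normal_subdiff _ _ _ _ hz Hn'.
      have := Isub _ _ Hs.
      rewrite (Hbar_scale rep t x (-px) (-q) (ltW t0)) ?oppr_gt0 // -/a scalerN -EFinD lee_fin.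
      have e1 : - q * a = 1 by rewrite /a mulfV // oppr_eq0 lt_eqF.
      move=> h; have := mulr_ge0 (ltW (eq_ind_r is_true qlt (oppr_gt0 q))) h.
      by rewrite mulrDr mulrN mulrA e1 mul1r.
  + move=> ix pt px q Hn; have [Isub Inor] := Ii ix.
    have := normal_q_le0 _ _ _ _ _ hz Hn; rewrite le_eqVlt => /orP[/eqP qeq|qlt].
    * rewrite qeq scalar0 in Hn; rewrite qeq oppr0 HZ; exact: Inor pt px Hn.
    * set a := (-q)^-1.
      have a0 : 0 < a by rewrite invr_gt0 oppr_gt0.
      have Hn' := normal_scale _ _ _ _ (ltW a0) Hn.
      have eaq : a * q = -1 by rewrite /a invrN mulNr mulVf ?lt_eqF.
      rewrite scale_row_mx pt2_scale scale_scalar_mx eaq in Hn'.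
      have Hs := normal_subdiff _ _ _ _ hz Hn'.
      have := Isub _ _ Hs.
      rewrite (Hbar_scale rep t x (-px) (-q) (ltW t0)) ?oppr_gt0 // -/a scalerN -EFinD.
      have e1 : - q * a = 1 by rewrite /a mulfV // oppr_eq0 lt_eqF.
      move=> h; congr (_%:E).
      have -> : - pt = - q * (- (a * pt)) by rewrite mulrN mulrA e1 mul1r.
      by rewrite -mulrDr h mulr0.
- move=> [lsc [C [HC HII]]]; split => //; exists C; split => // t x Ct Wlt.
  have t0 := Ct0 C HC t Ct.
  have hz := key t x t0 Wlt.
  have [IIb IIi] := HII t x Ct Wlt.
  have HZ w := Hbar_zero rep t x w (ltW t0) (Une t (ltW t0)) (Hphi t x (ltW t0)).
  split.
  + move=> bx; have H2 := IIb bx; split.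
    * move=> pt px Hs.
      have := H2 pt px (-1) (subdiff_normal _ _ _ _ hz Hs).
      by rewrite opprK (Hbar_one rep t x _ (ltW t0)) -EFinD lee_fin.
    * move=> pt px Hn; have := H2 pt px 0; rewrite scalar0 oppr0 HZ; apply; exact: Hn.
  + move=> ix; have H2 := IIi ix; split.
    * move=> pt px Hs.
      have := H2 pt px (-1) (subdiff_normal _ _ _ _ hz Hs).
      by rewrite opprK (Hbar_one rep t x _ (ltW t0)) -EFinD => -[].
    * move=> pt px Hn; have := H2 pt px 0; rewrite scalar0 oppr0 HZ; apply; exact: Hn.
Qed.
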